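(* Consider the two-sided market model described in the context with $\phi(x)=x^\theta$ for some $0<\theta<1$, and CP cost parameter $a>\zeta$. Let $S_{NN}(a)=\mathcal S(y_0)$ be the social welfare under net neutrality (all consumers and all CPs participate) and $S_{RM}(a)=\mathcal S(y^*(a))$ the social welfare under ISP revenue maximization, where $y^*(a)$ solves $g(y^* )=a$. Then there exists a unique $\bar a>\zeta$ such that for $\zeta<a<\bar a$ net neutrality yields higher social welfare than revenue maximization ($S_{NN}(a)>S_{RM}(a)$), while for $a>\bar a$ revenue maximization yields higher social welfare ($S_{RM}(a)>S_{NN}(a)$).
   Context: Model: fix $\gamma>2$, $\beta>2$, $\lambda>0$. Consumer types have density $x^{-\gamma}$ on $x\ge x_0:=(\frac{1}{\gamma-1})^{\frac{1}{\gamma-1}}$, CP types density $y^{-\beta}$ on $y\ge y_0:=(\frac{1}{\beta-1})^{\frac{1}{\beta-1}}$. Let $Y(s)=\int_s^\infty y^{1-\beta}dy$, $\bar X=\int_{x_0}^\infty x^{1-\gamma}dx$, $\bar Y=Y(y_0)$. With all consumers participating and CPs of type $\ge y$ participating, the social welfare (for CP cost parameter $a$) is $\mathcal S(y)=\int_{x_0}^\infty\phi(x\sqrt{\bar YY(y)})x^{-\gamma}dx+\lambda\bar X\sqrt{\bar YY(y)}-aY(y)$. The revenue-maximizing ISP (charging a membership fee and a CP fee that make threshold types indifferent) excludes all consumers below $x_0$ and CPs below $y^*$, where $y^*$ solves $g(y^* )=a$ with $g(y)=\frac12\big(\frac{\gamma-2}{\gamma-1}\phi'(x_0\sqrt{\bar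 Y Y(y)})+\lambda\big)\frac{\bar X\sqrt{\bar Y}}{\sqrt{Y(y)}}$ (increasing in $y$). Also $\zeta=\max\{\frac{1}{2}(\frac{\gamma-2}{\gamma-1}\phi'(\bar Yx_0)+\lambda)\bar X,\ \frac{1}{2}(\int_{x_0}^{\infty}\phi'(x\bar Y)x^{1-\gamma}dx+\lambda \bar X)\}$; for $a>\zeta$ net neutrality is not socially optimal. *)

(* Defs.v *)
From Stdlib Require Import Reals.
From Coquelicot Require Import Coquelicot.
Open Scope R_scope.

Definition Int_from (f : R -> R) (s : R) : R :=
  RInt_gen f (at_point s) (Rbar_locally p_infty).

(* lowest types *)
Definition x0 (gamma : R) : R := Rpower (/ (gamma - 1)) (/ (gamma - 1)).
Definition y0 (beta : R) : R := Rpower (/ (beta - 1)) (/ (beta - 1)).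

Definition Yf (beta s : R) : R := Int_from (fun y => Rpower y (1 - beta)) s.
Definition Xbar (gamma : R) : R :=
  Int_from (fun x => Rpower x (1 - gamma)) (x0 gamma).
Definition Ybar (beta : R) : R := Yf beta (y0 beta).

Definition Swel (gamma beta lambda : R) (phi : R -> R) (a y : R) : R :=
  Int_from (fun x => phi (x * sqrt (Ybar beta * Yf beta y)) * Rpower x (- gamma))
           (x0 gamma)
  + lambda * Xbar gamma * sqrt (Ybar beta * Yf beta y)
  - a * Yf beta y.

(* g(y), whose solution g(y_star) = a gives the revenue-maximizing CP threshold *)
Definition gfun (gamma beta lambda : R) (phi : R -> R) (y : R) : R :=
  / 2 * ((gamma - 2) / (gamma - 1) * Derive phi (x0 gamma * sqrt (Ybar beta * Yf beta y))
         + lambda)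
  * (Xbar gamma * sqrt (Ybar beta)) / sqrt (Yf beta y).

Definition zeta (gamma beta lambda : R) (phi : R -> R) : R :=
  Rmax (/ 2 * ((gamma - 2) / (gamma - 1) * Derive phi (Ybar beta * x0 gamma) + lambda)
          * Xbar gamma)
       (/ 2 * (Int_from (fun x => Derive phi (x * Ybar beta) * Rpower x (1 - gamma)) (x0 gamma)
               + lambda * Xbar gamma)).

Definition phi_pow (theta : R) (x : R) : R := Rpower x theta.

(* Main.v *)
Require Import Defs.
From Stdlib Require Import Reals Lra Psatz.
From Coquelicot Require Import Coquelicot.
Open Scope R_scope.
Lemma deriv_eq (f : R -> R) x l l' : l = l' -> is_derive f x l -> is_derive f x l'.
Proof. intros ->; auto. Qed.

Ltac req := match goal with |- ?a = ?b => change (a = b :> R) end.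
Ltac ad := auto_derive; try (match goal with |- _ = ?l => is_evar l; reflexivity end); try exact I.

Lemma is_derive_pow_gen (C p x : R) : 0 < x ->
  is_derive (fun y => C * Rpower y p) x (C * p * Rpower x (p - 1)).
Proof.
  intros Hx. unfold Rpower.
  eapply deriv_eq. 2:{ ad. lra. }
  replace ((p - 1) * ln x) with (p * ln x + - ln x) by ring.
  rewrite exp_plus, exp_Ropp, exp_ln by lra. match goal with |- ?a = ?b => change (a = b :> R) end. field. lra.
Qed.

Lemma filterlim_at_point_self (f : R -> R) s :
  filterlim f (at_point s) (locally (f s)).
Proof.
  intros P HP. unfold filtermap, at_point. now apply locally_singleton.
Qed.

Lemma lim_pow_infty (C p : R) : p < 0 ->
  filterlim (fun y => C * Rpower y p) (Rbar_locally p_infty) (locally 0).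
Proof.
  intros Hp.
  assert (H : is_lim (fun y => C * Rpower y p) p_infty 0).
  { replace (Finite 0) with (Rbar_mult C 0) by (simpl; f_equal; ring).
    apply is_lim_scal_l. unfold Rpower.
    apply (is_lim_comp exp (fun y => p * ln y) p_infty 0 m_infty).
    - apply is_lim_exp_m.
    - replace m_infty with (Rbar_mult p p_infty).
      + apply is_lim_scal_l. apply is_lim_ln_p.
      + simpl. destruct (Rle_dec 0 p) as [r|r]; [exfalso; apply (Rle_not_lt _ _ r Hp)|]. reflexivity.
    - exists 0. intros y _. discriminate. }
  exact H.
Qed.


Lemma Int_pow (f : R -> R) (C p s : R) : p < -1 -> 0 < s ->
  (forall x, s < x -> f x = C * Rpower x p) ->
  Int_from f s = - (C / (p + 1) * Rpower s (p + 1)).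
Proof.
  intros Hp Hs Hf.
  set (F := fun y => C / (p + 1) * Rpower y (p + 1)).
  assert (HD : forall x, 0 < x -> is_derive F x (C * Rpower x p)).
  { intros x Hx. eapply deriv_eq. 2: apply (is_derive_pow_gen (C / (p+1)) (p+1) x Hx).
    replace (p + 1 - 1) with p by ring. req. field. lra. }
  assert (Hint : is_RInt_gen (Derive F) (at_point s) (Rbar_locally p_infty) (0 - F s)).
  { apply is_RInt_gen_Derive.
    - apply (Filter_prod _ _ _ (fun x => x = s) (fun y => s < y)).
      + reflexivity.
      + exists s. auto.
      + intros a b -> Hb x Hx. simpl in Hx. rewrite Rmin_left in Hx by lra.
        eexists. apply HD. lra.
    - apply (Filter_prod _ _ _ (fun x => x = s) (fun y => s < y)).
      + reflexivity.
      + exists s. auto.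
      + intros a b -> Hb x Hx. simpl in Hx. rewrite Rmin_left in Hx by lra.
        apply continuous_ext_loc with (g := fun y => C * Rpower y p).
        * apply (locally_open (fun y => 0 < y)). apply open_gt.
          intros y Hy. symmetry. apply is_derive_unique. apply HD. exact Hy. lra.
        * apply (@ex_derive_continuous R_AbsRing R_NormedModule). eexists. apply is_derive_pow_gen. lra.
    - apply filterlim_at_point_self.
    - apply lim_pow_infty. lra. }
  apply is_RInt_gen_unique.
  apply is_RInt_gen_ext with (f := Derive F).
  - apply (Filter_prod _ _ _ (fun x => x = s) (fun y => s < y)).
    + reflexivity.
    + exists s. auto.
    + intros a b -> Hb x Hx. simpl in Hx. rewrite Rmin_left in Hx by lra.
      rewrite Hf by lra. apply is_derive_unique, HD. lra.
  - replace (- (C / (p + 1) * Rpower s (p + 1))) with (0 - F s) by (unfold F; ring).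
    exact Hint.
Qed.

Lemma mvt_lt (f f' : R -> R) a b : a < b ->
  (forall c, a <= c <= b -> is_derive f c (f' c)) -> (forall c, a < c < b -> 0 < f' c) -> f a < f b.
Proof.
  intros Hab Hd Hp.
  destruct (MVT_cor2 f f' a b Hab) as [c [Hc1 Hc2]].
  { intros c Hc. apply is_derive_Reals. apply Hd. lra. }
  assert (0 < f' c * (b - a)) by (apply Rmult_lt_0_compat; [apply Hp; lra| lra]).
  lra.
Qed.

Lemma mvt_le (f f' : R -> R) a b : a <= b ->
  (forall c, a <= c <= b -> is_derive f c (f' c)) -> (forall c, a < c < b -> 0 <= f' c) -> f a <= f b.
Proof.
  intros Hab Hd Hp. destruct (Rle_lt_or_eq_dec _ _ Hab) as [Hlt|<-]; [|lra].
  destruct (MVT_cor2 f f' a b Hlt) as [c [Hc1 Hc2]].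
  { intros c Hc. apply is_derive_Reals. apply Hd. lra. }
  assert (0 <= f' c * (b - a)) by (apply Rmult_le_pos; [apply Hp; lra| lra]).
  lra.
Qed.

Lemma exp_lt1 u : u < 0 -> exp u < 1.
Proof. intros H. rewrite <- exp_0. apply exp_increasing. exact H. Qed.

Lemma exp_half_sq u : exp (u/2) * exp (u/2) = exp u.
Proof. rewrite <- exp_plus. f_equal. field. Qed.

(* convexity: 1 - e^{a u} - a (1 - e^u) > 0 for u < 0 *)
Lemma psi_pos al u : 0 < al < 1 -> u < 0 -> 0 < 1 - exp (al * u) - al * (1 - exp u).
Proof.
  intros Hal Hu.
  set (f := fun v => - (1 - exp (al * v) - al * (1 - exp v))).
  assert (H := mvt_lt f (fun v => al * (exp (al * v) - exp v)) u 0 Hu).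
  unfold f in H. rewrite Rmult_0_r, exp_0 in H.
  assert (H' : - (1 - exp (al * u) - al * (1 - exp u)) < - (1 - 1 - al * (1 - 1))).
  { apply H.
    - intros c0 _. eapply deriv_eq. 2: ad. req; ring.
    - intros c Hc. apply Rmult_lt_0_compat; [lra|].
      assert (exp c < exp (al * c)) by (apply exp_increasing; nra). lra. }
  lra.
Qed.

Section Core.
Variables al M mm L : R.
Hypothesis Hal : 0 < al < 1.
Hypothesis HM : 0 < M.
Hypothesis Hmm : 0 < mm.
Hypothesis HL : 0 < L.
Hypothesis Hr : mm < 2 * al * M.

Definition Gc u := (mm * exp (al * u) / exp u + L / exp (u / 2)) / 2.
Definition Sn a u := M * exp (al * u) + L * exp (u / 2) - a * exp u.

Lemma Gc_alt u : Gc u = (mm * exp ((al - 1) * u) + L * exp (- (u / 2))) / 2.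
Proof.
  unfold Gc. replace ((al - 1) * u) with (al * u + - u) by ring.
  rewrite exp_plus, !exp_Ropp. unfold Rdiv; ring.
Qed.

Lemma Gc_decr u v : u < v -> Gc v < Gc u.
Proof.
  intros H. rewrite !Gc_alt.
  assert (exp ((al - 1) * v) < exp ((al - 1) * u)) by (apply exp_increasing; nra).
  assert (exp (- (v / 2)) < exp (- (u / 2))) by (apply exp_increasing; lra).
  nra.
Qed.

Lemma Gc_inj u v : Gc u = Gc v -> u = v.
Proof.
  intros H. destruct (Rtotal_order u v) as [h|[h|h]]; auto.
  - apply Gc_decr in h. lra.
  - apply Gc_decr in h. lra.
Qed.

Lemma Gc_cont u : continuous Gc u.
Proof.
  apply (@ex_derive_continuous R_AbsRing R_NormedModule).
  unfold Gc. auto_derive. split; [apply Rgt_not_eq, exp_pos|].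
  split; [apply Rgt_not_eq, exp_pos| exact I].
Qed.

Lemma Gc_surj a : Gc 0 < a -> exists u, u <= 0 /\ Gc u = a.
Proof.
  intros Ha.
  assert (HG0 : 0 < Gc 0).
  { unfold Gc. rewrite Rmult_0_r, Rdiv_0_l, exp_0.
    apply Rmult_lt_0_compat; [|lra]. unfold Rdiv. rewrite Rinv_1. lra. }
  set (k := Rabs (ln (2 * a / L)) + 1).
  set (u1 := -2 * k).
  assert (Hk : ln (2 * a / L) < k) by (unfold k; pose proof (Rle_abs (ln (2 * a / L))); lra).
  assert (Hk0 : 0 < k) by (unfold k; pose proof (Rabs_pos (ln (2 * a / L))); lra).
  assert (Hu1 : a < Gc u1).
  { rewrite Gc_alt. unfold u1. replace (- (-2 * k / 2)) with k by field.
    assert (exp (ln (2 * a / L)) < exp k) by (apply exp_increasing; exact Hk).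
    rewrite exp_ln in H by (apply Rdiv_lt_0_compat; lra).
    assert (0 < exp ((al - 1) * (-2 * k))) by apply exp_pos.
    assert (2 * a < L * exp k).
    { apply (Rmult_lt_compat_l L) in H; [|lra].
      replace (L * (2 * a / L)) with (2 * a) in H by (field; lra). lra. }
    nra. }
  destruct (IVT_gen_consistent Gc u1 0 a) as [u [Hu Hgu]].
  - intros x. apply Gc_cont.
  - rewrite Rmin_right, Rmax_left; lra.
  - exists u. split; [|exact Hgu].
    rewrite Rmax_right in Hu by (unfold u1; lra). lra.
Qed.

Definition Uu u := M * (1 - exp (al * u)) - mm * (1 - exp u) * exp (al * u) / (2 * exp u).
Definition Hh u := (1 - exp (u / 2)) * (1 - exp (u / 2)) / (2 * exp (u / 2)).
Definition Wc u := Uu u - L * Hh u.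
Definition Vc u := M * (exp u / exp (al * u) - exp u) - mm * (1 - exp u) / 2.

Lemma Wc_eq u : Wc u = Sn (Gc u) 0 - Sn (Gc u) u.
Proof.
  unfold Wc, Uu, Hh, Sn, Gc. rewrite !Rmult_0_r, Rdiv_0_l, exp_0.
  rewrite <- (exp_half_sq u).
  pose proof (exp_pos (u/2)). pose proof (exp_pos (al * u)).
  req. field. lra.
Qed.

Lemma Vc_eq u : Vc u = Uu u * (exp u / exp (al * u)).
Proof.
  unfold Vc, Uu. pose proof (exp_pos u). pose proof (exp_pos (al * u)).
  req. field. lra.
Qed.

Lemma Hh_pos u : u < 0 -> 0 < Hh u.
Proof.
  intros Hu. unfold Hh. pose proof (exp_lt1 (u/2) ltac:(lra)). pose proof (exp_pos (u/2)).
  apply Rdiv_lt_0_compat; nra.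
Qed.

Lemma F1 u : u < 0 ->
  2 * al * exp (al * u) * (1 - exp (u/2)) <= (1 - exp (al * u)) * (1 + exp (u/2)).
Proof.
  intros Hu.
  set (p := exp (al * u)). set (s := exp (u/2)).
  assert (Hp : 0 < p) by apply exp_pos. assert (Hs : 0 < s) by apply exp_pos.
  assert (Hp1 : p < 1) by (apply exp_lt1; nra).
  assert (Hs1 : 1 + u/2 <= s) by apply exp_ineq1_le.
  assert (He : 1 + - (al * u) <= exp (- (al * u))) by apply exp_ineq1_le.
  rewrite exp_Ropp in He. fold p in He.
  assert (H1 : 1 - p >= - al * u * p).
  { apply (Rmult_le_compat_r p) in He; [|lra].
    rewrite Rinv_l in He by lra. nra. }
  assert (H2 : al * p * (- u) >= al * p * (2 * (1 - s))).
  { apply Rmult_ge_compat_l; [|lra]. apply Rle_ge, Rmult_le_pos; lra. }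
  assert (H3 : 0 <= (1 - p) * s) by (apply Rmult_le_pos; lra).
  nra.
Qed.

Lemma F2 u : u < 0 ->
  al * exp (al * u) * (1 - exp u) < (1 - exp (al * u)) * (1 - al + al * exp u).
Proof.
  intros Hu.
  set (phi := fun v => - ((exp (- (al * v)) - 1) * (1 - al + al * exp v) - al * (1 - exp v))).
  assert (H : phi u < phi 0).
  { apply (mvt_lt phi (fun v => - (al * (1 - al) * exp (- (al * v)) * (exp v - 1)))); [exact Hu| |].
    - intros c _. unfold phi. eapply deriv_eq. 2: ad. rewrite exp_Ropp. req. field.
      apply Rgt_not_eq, exp_pos.
    - intros c Hc. pose proof (exp_lt1 c ltac:(lra)). pose proof (exp_pos (- (al * c))).
      assert (0 < al * (1 - al)) by nra.
      assert (0 < al * (1 - al) * exp (- (al * c))) by nra. nra. }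
  unfold phi in H. rewrite Rmult_0_r, Ropp_0, !exp_0 in H.
  rewrite exp_Ropp in H. set (p := exp (al * u)) in *.
  assert (Hp : 0 < p) by apply exp_pos.
  assert (Hq : 0 < (/ p - 1) * (1 - al + al * exp u) - al * (1 - exp u)) by lra.
  apply (Rmult_lt_compat_l p) in Hq; [|lra].
  replace (p * ((/ p - 1) * (1 - al + al * exp u) - al * (1 - exp u))) with
    ((1 - p) * (1 - al + al * exp u) - al * p * (1 - exp u)) in Hq by (req; field; lra).
  lra.
Qed.

Definition Bk u := M * ((1 - al) / exp (al * u) - 1) + mm / 2.

Lemma Vc_deriv c : is_derive Vc c (exp c * Bk c).
Proof.
  unfold Vc, Bk. eapply deriv_eq. 2:{ ad. apply Rgt_not_eq, exp_pos. }
  pose proof (exp_pos (al * c)). req. field. lra.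
Qed.

Lemma Bk_mono u v : u <= v -> Bk v <= Bk u.
Proof.
  intros H. unfold Bk.
  assert (exp (al * u) <= exp (al * v)).
  { destruct (Rle_lt_or_eq_dec _ _ H) as [h|<-]; [|lra].
    left. apply exp_increasing. nra. }
  assert (/ exp (al * v) <= / exp (al * u)).
  { apply Rinv_le_contravar; [apply exp_pos|assumption]. }
  unfold Rdiv. assert (0 < M * (1 - al)) by (apply Rmult_lt_0_compat; lra).
  assert (M * (1 - al) * / exp (al * v) <= M * (1 - al) * / exp (al * u))
    by (apply Rmult_le_compat_l; lra).
  lra.
Qed.

Lemma Vc0 : Vc 0 = 0.
Proof. unfold Vc. rewrite Rmult_0_r, exp_0. unfold Rdiv. rewrite Rinv_1. ring. Qed.

Lemma Vint u1 v : u1 < v < 0 -> 0 < Vc u1 -> 0 < Vc v.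
Proof.
  intros [H1 H2] HV.
  destruct (Rlt_or_le (Bk v) 0) as [Hb|Hb].
  - assert (H : (fun x => - Vc x) v < (fun x => - Vc x) 0).
    { apply (mvt_lt (fun x => - Vc x) (fun x => - (exp x * Bk x)) v 0); [exact H2| |].
      - intros c _. apply (is_derive_opp Vc). apply Vc_deriv.
      - intros c Hc. pose proof (Bk_mono v c ltac:(lra)). pose proof (exp_pos c). nra. }
    simpl in H. rewrite Vc0 in H. lra.
  - assert (H : Vc u1 <= Vc v).
    { apply (mvt_le Vc (fun x => exp x * Bk x) u1 v); [lra| |].
      - intros c _. apply Vc_deriv.
      - intros c Hc. pose proof (Bk_mono c v ltac:(lra)). pose proof (exp_pos c). nra. }
    lra.
Qed.

Definition Rc u := Uu u / Hh u.
Definition Ep u := -2 * al * M * (exp (u/2) * exp (u/2)) + mm * (exp (u/2) * exp (u/2))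
  + mm * (1 - al) * (1 - exp (u/2) * exp (u/2))
  + Vc u * (1 + exp (u/2)) / (1 - exp (u/2)).
Definition Rd u := (1 - exp (u/2)) * (1 - exp (u/2)) * exp (al * u) * Ep u
  / (4 * exp (u/2) * exp (u/2) * exp (u/2)) / (Hh u * Hh u).

Lemma Rc_deriv c : c < 0 -> is_derive Rc c (Rd c).
Proof.
  intros Hc. pose proof (Hh_pos c Hc) as HH.
  pose proof (exp_pos (c/2)). pose proof (exp_pos (al * c)).
  pose proof (exp_lt1 (c/2) ltac:(lra)).
  unfold Rc, Rd, Ep, Vc. unfold Hh in *. unfold Uu.
  eapply deriv_eq.
  2:{ ad. change (c * / 2) with (c / 2). pose proof (exp_pos c).
      split; [lra|]. split; [lra|]. split; [|exact I].
      apply Rgt_not_eq. unfold Rminus in HH. exact HH. }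
  rewrite <- (exp_half_sq c). req. change (c * / 2) with (c / 2). set (s := exp (c/2)) in *. set (p := exp (al * c)) in *. field. repeat split; lra.
Qed.

Lemma Ep_pos u : u < 0 -> 0 < Vc u -> 0 < Ep u.
Proof.
  intros Hu HV.
  pose proof (F1 u Hu) as HF1. pose proof (F2 u Hu) as HF2.
  unfold Ep. unfold Vc in *. rewrite <- (exp_half_sq u) in *.
  set (s := exp (u/2)) in *. set (p := exp (al * u)) in *.
  assert (Hs : 0 < s) by apply exp_pos. assert (Hp : 0 < p) by apply exp_pos.
  assert (Hs1 : s < 1) by (apply exp_lt1; lra).
  assert (Hp1 : p < 1) by (apply exp_lt1; nra).
  set (w := M * (s * s / p - s * s) - mm * (1 - s * s) / 2) in *.
  set (T := s * s * (1 - p) / p).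
  assert (HT : 0 < T) by (unfold T; apply Rdiv_lt_0_compat; [apply Rmult_lt_0_compat; nra|lra]).
  assert (A1 : 0 <= (1 + s) / (1 - s) * T - 2 * al * (s * s)).
  { replace ((1 + s) / (1 - s) * T - 2 * al * (s * s)) with
      (s * s * ((1 - p) * (1 + s) - 2 * al * p * (1 - s)) / (p * (1 - s)))
      by (unfold T; req; field; lra).
    apply Rmult_le_pos; [apply Rmult_le_pos; nra|].
    left. apply Rinv_0_lt_compat. nra. }
  assert (A2 : 0 < T * (1 - al + al * (s * s)) - al * (s * s) * (1 - s * s)).
  { replace (T * (1 - al + al * (s * s)) - al * (s * s) * (1 - s * s)) with
      (s * s * ((1 - p) * (1 - al + al * (s * s)) - al * p * (1 - s * s)) / p)
      by (unfold T; req; field; lra).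
    apply Rdiv_lt_0_compat; [|lra]. apply Rmult_lt_0_compat; nra. }
  set (E := -2 * al * M * (s * s) + mm * (s * s) + mm * (1 - al) * (1 - s * s) + w * (1 + s) / (1 - s)).
  assert (Hid : E * T = w * ((1 + s) / (1 - s) * T - 2 * al * (s * s))
                + mm * (T * (1 - al + al * (s * s)) - al * (s * s) * (1 - s * s))).
  { unfold E, w, T. req. field. lra. }
  assert (0 < E * T).
  { rewrite Hid. assert (0 <= w * ((1 + s) / (1 - s) * T - 2 * al * (s * s))) by (apply Rmult_le_pos; lra).
    assert (0 < mm * (T * (1 - al + al * (s * s)) - al * (s * s) * (1 - s * s))) by (apply Rmult_lt_0_compat; lra).
    lra. }
  destruct (Rle_or_lt E 0) as [h|h]; [|exact h].
  assert (E * T <= 0) by (apply Rmult_le_0_r; lra). lra.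
Qed.

Lemma Rc_mono u1 u2 : u1 < u2 -> u2 < 0 -> 0 < Uu u1 -> Rc u1 < Rc u2.
Proof.
  intros H12 H2 HU.
  apply (mvt_lt Rc Rd u1 u2 H12).
  - intros c Hc. apply Rc_deriv. lra.
  - intros c Hc.
    assert (HV1 : 0 < Vc u1).
    { rewrite Vc_eq. apply Rmult_lt_0_compat; [exact HU|].
      apply Rdiv_lt_0_compat; apply exp_pos. }
    assert (HVc : 0 < Vc c) by (apply (Vint u1 c); [lra|exact HV1]).
    assert (HE : 0 < Ep c) by (apply Ep_pos; [lra|exact HVc]).
    pose proof (Hh_pos c ltac:(lra)). pose proof (exp_pos (c/2)). pose proof (exp_pos (al*c)).
    pose proof (exp_lt1 (c/2) ltac:(lra)).
    unfold Rd. apply Rdiv_lt_0_compat; [|apply Rmult_lt_0_compat; lra].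
    apply Rdiv_lt_0_compat.
    + apply Rmult_lt_0_compat; [|exact HE]. apply Rmult_lt_0_compat; [|lra]. nra.
    + repeat apply Rmult_lt_0_compat; lra.
Qed.

Definition Zc := al * M + L / 2.

Lemma Gc0_lt_Z : Gc 0 < Zc.
Proof.
  unfold Gc, Zc. rewrite Rmult_0_r, Rdiv_0_l, !exp_0. unfold Rdiv. rewrite Rinv_1. lra.
Qed.

Lemma Gc_sol a : Gc 0 < a -> exists! u, u <= 0 /\ Gc u = a.
Proof.
  intros Ha. destruct (Gc_surj a Ha) as [u Hu]. exists u. split; [exact Hu|].
  intros v [_ Hv]. apply Gc_inj. destruct Hu as [_ ->]. auto.
Qed.

Lemma Wc_cont u : continuous Wc u.
Proof.
  apply (@ex_derive_continuous R_AbsRing R_NormedModule).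
  unfold Wc, Uu, Hh. auto_derive. pose proof (exp_pos u). pose proof (exp_pos (u * / 2)).
  repeat split; try exact I; lra.
Qed.

Lemma Wc_uz u : u < 0 -> Gc u = Zc -> 0 < Wc u.
Proof.
  intros Hu HG. rewrite Wc_eq, HG. unfold Sn, Zc.
  rewrite Rmult_0_r, Rdiv_0_l, !exp_0.
  pose proof (psi_pos al u Hal Hu). rewrite <- (exp_half_sq u) in *.
  pose proof (exp_lt1 (u/2) ltac:(lra)).
  assert (0 < (1 - exp (u/2)) * (1 - exp (u/2))) by nra.
  nra.
Qed.

Lemma Uu_neg u : u <= -1 -> 4 * M / (mm * (1 - al)) <= - u -> Uu u < 0.
Proof.
  intros H1 H2. unfold Uu.
  assert (He : exp u < / 2).
  { assert (exp u <= exp (-1)).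
    { destruct (Rle_lt_or_eq_dec _ _ H1) as [h| ->]; [left; apply exp_increasing; exact h|lra]. }
    assert (Hm1 : exp (-1) = / exp 1) by (rewrite <- exp_Ropp; f_equal; ring). rewrite Hm1 in H. pose proof (exp_ineq1 1 ltac:(lra)).
    assert (/ exp 1 < / 2) by (apply Rinv_lt_contravar; lra). lra. }
  set (q := exp ((al - 1) * u)).
  assert (Hq : exp (al * u) / exp u = q).
  { unfold q. replace ((al - 1) * u) with (al * u + - u) by ring.
    rewrite exp_plus, exp_Ropp. reflexivity. }
  assert (Hq1 : 1 + (al - 1) * u <= q) by apply exp_ineq1_le.
  assert (Hq2 : (1 - al) * (4 * M / (mm * (1 - al))) <= (1 - al) * (- u))
    by (apply Rmult_le_compat_l; lra).
  replace ((1 - al) * (4 * M / (mm * (1 - al)))) with (4 * M / mm) in Hq2 by (field; lra).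
  assert (Hq3 : mm * (1 + 4 * M / mm) <= mm * q) by (apply Rmult_le_compat_l; lra).
  replace (mm * (1 + 4 * M / mm)) with (mm + 4 * M) in Hq3 by (field; lra).
  replace (mm * (1 - exp u) * exp (al * u) / (2 * exp u)) with (mm * q * (1 - exp u) / 2).
  2:{ rewrite <- Hq. pose proof (exp_pos u). req. field. lra. }
  pose proof (exp_pos (al * u)). pose proof (exp_pos u).
  assert (mm * q * (1 - exp u) >= mm * q * / 2).
  { apply Rmult_ge_compat_l; lra. }
  assert (0 < M * exp (al * u)) by (apply Rmult_lt_0_compat; lra). lra.
Qed.

Theorem core_main :
  (forall a, Gc 0 < a -> exists! u, u <= 0 /\ Gc u = a) /\
  exists! abar, Zc < abar /\
    (forall a u, Zc < a < abar -> u <= 0 -> Gc u = a -> Sn a 0 > Sn a u) /\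
    (forall a u, abar < a -> u <= 0 -> Gc u = a -> Sn a u > Sn a 0).
Proof.
  split; [exact Gc_sol|].
  destruct (Gc_surj Zc Gc0_lt_Z) as [uz [Huz HGz]].
  assert (Huz' : uz < 0).
  { destruct (Rle_lt_or_eq_dec _ _ Huz) as [h|h]; [exact h|].
    subst uz. pose proof Gc0_lt_Z. lra. }
  set (ulo := Rmin (- (1 + 4 * M / (mm * (1 - al)))) (uz - 1)).
  assert (Hlo1 : ulo <= - (1 + 4 * M / (mm * (1 - al)))) by apply Rmin_l.
  assert (Hlo2 : ulo <= uz - 1) by apply Rmin_r.
  assert (Hpos : 0 <= 4 * M / (mm * (1 - al))).
  { left. apply Rdiv_lt_0_compat; [lra|]. apply Rmult_lt_0_compat; lra. }
  assert (Wlo : Wc ulo < 0).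
  { unfold Wc. pose proof (Uu_neg ulo ltac:(lra) ltac:(lra)).
    pose proof (Hh_pos ulo ltac:(lra)). nra. }
  assert (Wz : 0 < Wc uz) by (apply Wc_uz; assumption).
  destruct (IVT_gen_consistent Wc ulo uz 0) as [us [Hus HWs]].
  { intros x. apply Wc_cont. }
  { rewrite Rmin_left, Rmax_right; lra. }
  rewrite Rmin_left, Rmax_right in Hus by lra.
  assert (Hus' : us < uz).
  { destruct (Rle_lt_or_eq_dec _ _ (proj2 Hus)) as [h|h]; [exact h|]. subst. lra. }
  assert (HUs : Uu us = L * Hh us) by (unfold Wc in HWs; lra).
  assert (HHs : 0 < Hh us) by (apply Hh_pos; lra).
  assert (HRs : Rc us = L) by (unfold Rc; rewrite HUs; field; lra).
  assert (Wpos : forall u, us < u < 0 -> 0 < Wc u).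
  { intros u Hu. pose proof (Rc_mono us u ltac:(lra) ltac:(lra) ltac:(nra)) as Hm.
    rewrite HRs in Hm. unfold Rc in Hm. pose proof (Hh_pos u ltac:(lra)).
    unfold Wc. apply (Rmult_lt_compat_r (Hh u)) in Hm; [|lra].
    unfold Rdiv in Hm. rewrite Rmult_assoc, Rinv_l in Hm by lra. lra. }
  assert (Wneg : forall u, u < us -> Wc u < 0).
  { intros u Hu. pose proof (Hh_pos u ltac:(lra)).
    destruct (Rle_or_lt (Uu u) 0) as [h|h].
    - unfold Wc. nra.
    - pose proof (Rc_mono u us Hu ltac:(lra) h) as Hm.
      rewrite HRs in Hm. unfold Rc in Hm.
      apply (Rmult_lt_compat_r (Hh u)) in Hm; [|lra].
      unfold Rdiv in Hm. rewrite Rmult_assoc, Rinv_l in Hm by lra. unfold Wc. lra. }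
  assert (Prop1 : Zc < Gc us /\
    (forall a u, Zc < a < Gc us -> u <= 0 -> Gc u = a -> Sn a 0 > Sn a u) /\
    (forall a u, Gc us < a -> u <= 0 -> Gc u = a -> Sn a u > Sn a 0)).
  { split; [rewrite <- HGz; apply Gc_decr; exact Hus'|]. split.
    - intros a u Ha Hu HGu.
      assert (us < u).
      { destruct (Rle_or_lt u us) as [h|h]; [|exact h].
        destruct (Rle_lt_or_eq_dec _ _ h) as [h'|h'].
        - apply Gc_decr in h'. lra.
        - subst. lra. }
      assert (u < uz).
      { destruct (Rle_or_lt uz u) as [h|h]; [|exact h].
        destruct (Rle_lt_or_eq_dec _ _ h) as [h'|h'].
        - apply Gc_decr in h'. lra.
        - subst. lra. }
      pose proof (Wpos u ltac:(lra)). rewrite Wc_eq, HGu in H1. lra.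
    - intros a u Ha Hu HGu.
      assert (u < us).
      { destruct (Rle_or_lt us u) as [h|h]; [|exact h].
        destruct (Rle_lt_or_eq_dec _ _ h) as [h'|h'].
        - apply Gc_decr in h'. lra.
        - subst. lra. }
      pose proof (Wneg u H). rewrite Wc_eq, HGu in H0. lra. }
  exists (Gc us). split; [exact Prop1|].
  intros ab [Hab [P1 P2]].
  destruct Prop1 as [Q0 [Q1 Q2]].
  destruct (Rtotal_order (Gc us) ab) as [h|[h|h]]; [|exact h|].
  - set (a := (Gc us + ab) / 2).
    destruct (Gc_surj a ltac:(pose proof Gc0_lt_Z; unfold a; lra)) as [u [Hu HGu]].
    pose proof (P1 a u ltac:(unfold a; lra) Hu HGu).
    pose proof (Q2 a u ltac:(unfold a; lra) Hu HGu). lra.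
  - set (a := (Gc us + ab) / 2).
    destruct (Gc_surj a ltac:(pose proof Gc0_lt_Z; unfold a; lra)) as [u [Hu HGu]].
    pose proof (Q1 a u ltac:(unfold a; lra) Hu HGu).
    pose proof (P2 a u ltac:(unfold a; lra) Hu HGu). lra.
Qed.

End Core.

Lemma x0_pos g : 0 < x0 g.
Proof. unfold x0, Rpower. apply exp_pos. Qed.
Lemma y0_pos b : 0 < y0 b.
Proof. unfold y0, Rpower. apply exp_pos. Qed.

Lemma Yf_eq b s : 2 < b -> 0 < s -> Yf b s = Rpower s (2 - b) / (b - 2).
Proof.
  intros Hb Hs. unfold Yf.
  rewrite (Int_pow _ 1 (1 - b) s); [| lra | exact Hs | intros; ring].
  replace (1 - b + 1) with (2 - b) by ring. req. field. lra.
Qed.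

Lemma Xbar_eq g : 2 < g -> Xbar g = Rpower (x0 g) (2 - g) / (g - 2).
Proof.
  intros Hg. unfold Xbar.
  rewrite (Int_pow _ 1 (1 - g) (x0 g)); [| lra | apply x0_pos | intros; ring].
  replace (1 - g + 1) with (2 - g) by ring. req. field. lra.
Qed.

Lemma Rpower_pos x p : 0 < Rpower x p.
Proof. unfold Rpower. apply exp_pos. Qed.

Lemma Int_phi g th c : 2 < g -> 0 < th < 1 -> 0 < c ->
  Int_from (fun x => phi_pow th (x * c) * Rpower x (- g)) (x0 g)
  = Rpower c th * (Rpower (x0 g) (th + 1 - g) / (g - 1 - th)).
Proof.
  intros Hg Hth Hc.
  rewrite (Int_pow _ (Rpower c th) (th - g) (x0 g)); [| lra | apply x0_pos |].
  - replace (th - g + 1) with (th + 1 - g) by ring. req. field. lra.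
  - intros x Hx. pose proof (x0_pos g). unfold phi_pow.
    rewrite <- Rpower_mult_distr by lra.
    replace (th - g) with (th + - g) by ring. rewrite Rpower_plus. ring.
Qed.

Lemma Dphi th q : 0 < q -> Derive (phi_pow th) q = th * Rpower q (th - 1).
Proof.
  intros Hq. apply is_derive_unique.
  apply is_derive_ext with (f := fun y => 1 * Rpower y th).
  - intros t. unfold phi_pow. req. ring.
  - eapply deriv_eq. 2: apply (is_derive_pow_gen 1 th q Hq). req. ring.
Qed.

Lemma Int_zeta g th Yb : 2 < g -> 0 < th < 1 -> 0 < Yb ->
  Int_from (fun x => Derive (phi_pow th) (x * Yb) * Rpower x (1 - g)) (x0 g)
  = th * Rpower Yb (th - 1) * (Rpower (x0 g) (th + 1 - g) / (g - 1 - th)).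
Proof.
  intros Hg Hth HY.
  rewrite (Int_pow _ (th * Rpower Yb (th - 1)) (th - g) (x0 g)); [| lra | apply x0_pos |].
  - replace (th - g + 1) with (th + 1 - g) by ring. req. field. lra.
  - intros x Hx. pose proof (x0_pos g).
    rewrite Dphi by (apply Rmult_lt_0_compat; lra).
    rewrite <- Rpower_mult_distr by lra.
    replace (th - g) with ((th - 1) + (1 - g)) by ring. rewrite Rpower_plus. ring.
Qed.

Theorem theorem5 (gamma beta lambda theta : R) :
  2 < gamma -> 2 < beta -> 0 < lambda -> 0 < theta < 1 ->
  let phi := phi_pow theta in
  let z := zeta gamma beta lambda phi in
  (* for every a > zeta the revenue-maximizing threshold y_star(a) >= y0 is well defined *)
  (forall a, z < a -> exists! y, y0 beta <= y /\ gfun gamma beta lambda phi y = a) /\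
  (* the threshold abar *)
  exists! abar, z < abar /\
    (forall a y, z < a < abar -> y0 beta <= y -> gfun gamma beta lambda phi y = a ->
       Swel gamma beta lambda phi a (y0 beta) > Swel gamma beta lambda phi a y) /\
    (forall a y, abar < a -> y0 beta <= y -> gfun gamma beta lambda phi y = a ->
       Swel gamma beta lambda phi a y > Swel gamma beta lambda phi a (y0 beta)).
Proof.
  intros Hg Hb Hl Hth. cbv zeta.
  pose proof (x0_pos gamma) as Hx0. pose proof (y0_pos beta) as Hy0.
  set (xx0 := x0 gamma) in *. set (yy0 := y0 beta) in *.
  assert (HYbe : Ybar beta = Rpower yy0 (2 - beta) / (beta - 2)).
  { unfold Ybar. apply Yf_eq; assumption. }
  assert (HXbe : Xbar gamma = Rpower xx0 (2 - gamma) / (gamma - 2)) by (apply Xbar_eq; exact Hg).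
  set (Yb := Ybar beta) in *. set (Xb := Xbar gamma) in *.
  assert (HYb : 0 < Yb) by (rewrite HYbe; apply Rdiv_lt_0_compat; [apply Rpower_pos|lra]).
  assert (HXb : 0 < Xb) by (rewrite HXbe; apply Rdiv_lt_0_compat; [apply Rpower_pos|lra]).
  set (Ac := Rpower xx0 (theta + 1 - gamma) / (gamma - 1 - theta)).
  assert (HAc : 0 < Ac) by (apply Rdiv_lt_0_compat; [apply Rpower_pos|lra]).
  set (X1 := Rpower xx0 (theta - 1)). set (Y1 := Rpower Yb (theta - 1)).
  assert (HX1 : 0 < X1) by apply Rpower_pos. assert (HY1 : 0 < Y1) by apply Rpower_pos.
  assert (HYt : Rpower Yb theta = Y1 * Yb).
  { unfold Y1. replace theta with ((theta - 1) + 1) at 1 by ring.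
    rewrite Rpower_plus, Rpower_1 by exact HYb. reflexivity. }
  set (cc := (gamma - 2) / (gamma - 1)).
  set (al := theta / 2).
  set (M := Rpower Yb theta * Ac / Yb).
  set (mm := cc * theta * X1 * Y1 * Xb).
  set (L := lambda * Xb).
  assert (Hal : 0 < al < 1) by (unfold al; lra).
  assert (HM : 0 < M) by (unfold M; rewrite HYt; apply Rdiv_lt_0_compat; [|lra];
                          apply Rmult_lt_0_compat; [apply Rmult_lt_0_compat|]; lra).
  assert (Hcc : 0 < cc) by (unfold cc; apply Rdiv_lt_0_compat; lra).
  assert (Hmm : 0 < mm) by (unfold mm; apply Rmult_lt_0_compat; [apply Rmult_lt_0_compat; [apply Rmult_lt_0_compat; [apply Rmult_lt_0_compat|]|]|]; lra).
  assert (HL : 0 < L) by (unfold L; apply Rmult_lt_0_compat; lra).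
  assert (HcX : cc * X1 * Xb < Ac).
  { unfold cc, X1, Ac. rewrite HXbe.
    replace ((gamma - 2) / (gamma - 1) * Rpower xx0 (theta - 1) * (Rpower xx0 (2 - gamma) / (gamma - 2)))
      with ((Rpower xx0 (theta - 1) * Rpower xx0 (2 - gamma)) / (gamma - 1)) by (field; lra).
    rewrite <- Rpower_plus. replace (theta - 1 + (2 - gamma)) with (theta + 1 - gamma) by ring.
    pose proof (Rpower_pos xx0 (theta + 1 - gamma)).
    unfold Rdiv. apply Rmult_lt_compat_l; [lra|]. apply Rinv_lt_contravar; nra. }
  assert (Hr : mm < 2 * al * M).
  { unfold mm, M, al. rewrite HYt.
    replace (2 * (theta / 2) * (Y1 * Yb * Ac / Yb)) with (theta * Y1 * Ac) by (field; lra).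
    replace (cc * theta * X1 * Y1 * Xb) with (theta * Y1 * (cc * X1 * Xb)) by ring.
    apply Rmult_lt_compat_l; [nra|exact HcX]. }
  pose proof (core_main al M mm L Hal HM Hmm HL Hr) as [Core1 Core2].
  pose proof (Gc0_lt_Z al M mm L Hr) as HG0Z.
  assert (Hz : zeta gamma beta lambda (phi_pow theta) = Zc al M L).
  { unfold zeta. fold xx0 Yb Xb.
    rewrite Dphi by (apply Rmult_lt_0_compat; lra).
    rewrite Int_zeta by assumption. fold xx0 Ac.
    rewrite <- Rpower_mult_distr by lra. fold X1 Y1.
    rewrite Rmax_right.
    - unfold Zc, M, L, al. rewrite HYt. req. field. lra.
    - assert (cc * (theta * (Y1 * X1)) * Xb < theta * Y1 * Ac).
      { replace (cc * (theta * (Y1 * X1)) * Xb) with (theta * Y1 * (cc * X1 * Xb)) by ring.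
        apply Rmult_lt_compat_l; [nra|exact HcX]. }
      fold cc. lra. }
  rewrite Hz.
  set (uof := fun y => (2 - beta) * (ln y - ln yy0)).
  assert (Htr : forall y, 0 < y ->
     gfun gamma beta lambda (phi_pow theta) y = Gc al mm L (uof y) /\
     forall a, Swel gamma beta lambda (phi_pow theta) a y = Yb * Sn al M L a (uof y)).
  { intros y Hy. set (u := uof y).
    assert (HY : Yf beta y = Yb * exp u).
    { rewrite Yf_eq by assumption. rewrite HYbe. unfold Rpower, u, uof.
      replace ((2 - beta) * ln y) with ((2 - beta) * ln yy0 + (2 - beta) * (ln y - ln yy0)) by ring.
      rewrite exp_plus. req. field. lra. }
    set (s := exp (u / 2)).
    assert (Hs : 0 < s) by apply exp_pos.
    assert (Hss : exp u = s * s) by (unfold s; rewrite exp_half_sq; reflexivity).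
    assert (Hsq1 : sqrt (Yb * Yf beta y) = Yb * s).
    { rewrite HY, Hss. replace (Yb * (Yb * (s * s))) with ((Yb * s) * (Yb * s)) by ring.
      apply sqrt_square. nra. }
    assert (Hsq2 : sqrt (Yf beta y) = sqrt Yb * s).
    { rewrite HY, Hss, sqrt_mult by nra. rewrite sqrt_square by lra. reflexivity. }
    assert (HsY : 0 < sqrt Yb) by (apply sqrt_lt_R0; exact HYb).
    assert (Hlns : ln s = u / 2) by (unfold s; apply ln_exp).
    split.
    - unfold gfun. fold xx0 Yb Xb. rewrite Hsq1, Hsq2.
      rewrite Dphi by (apply Rmult_lt_0_compat; [lra|nra]).
      rewrite <- !Rpower_mult_distr by nra. fold X1 Y1.
      assert (HE : Rpower s (theta - 1) * exp u = exp (al * u) * s).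
      { unfold Rpower. rewrite Hlns. unfold s. rewrite <- !exp_plus. f_equal. unfold al. field. }
      unfold Gc. fold cc. unfold mm, L.
      replace (exp (al * u)) with (Rpower s (theta - 1) * exp u / s) by (rewrite HE; req; field; lra).
      rewrite Hss. fold s. req. field. repeat split; lra.
    - intros a. unfold Swel. fold xx0 Yb Xb. rewrite Hsq1.
      rewrite Int_phi by (try assumption; nra). fold xx0 Ac.
      rewrite HY. rewrite <- Rpower_mult_distr by nra.
      assert (HE : Rpower s theta = exp (al * u)).
      { unfold Rpower. rewrite Hlns. f_equal. unfold al. field. }
      rewrite HE. unfold Sn, M, L. fold s. req. field. lra. }
  assert (Huy : forall y, yy0 <= y -> uof y <= 0).
  { intros y Hy. unfold uof. assert (ln yy0 <= ln y) by (apply ln_le; assumption). nra. }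
  assert (Hyu : forall u, u <= 0 -> exists y, yy0 <= y /\ uof y = u).
  { intros u Hu. exists (yy0 * exp (u / (2 - beta))).
    assert (H0 : 0 <= u / (2 - beta)).
    { replace (u / (2 - beta)) with ((- u) / (beta - 2)) by (field; lra).
      apply Rdiv_le_0_compat; lra. }
    split.
    - assert (1 <= exp (u / (2 - beta))).
      { pose proof (exp_ineq1_le (u / (2 - beta))). lra. }
      nra.
    - unfold uof. rewrite ln_mult, ln_exp by (try apply exp_pos; lra).
      field. lra. }
  assert (Hinj : forall y1 y2, 0 < y1 -> 0 < y2 -> uof y1 = uof y2 -> y1 = y2).
  { intros y1 y2 H1 H2 H. unfold uof in H. apply ln_inv; try assumption.
    apply Rmult_eq_reg_l in H; lra. }
  assert (Htr0 : forall a, Swel gamma beta lambda (phi_pow theta) a yy0 = Yb * Sn al M L a 0).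
  { intros a. destruct (Htr yy0 Hy0) as [_ H]. rewrite H. unfold uof.
    replace ((2 - beta) * (ln yy0 - ln yy0)) with 0 by ring. reflexivity. }
  split.
  - intros a Ha.
    destruct (Core1 a ltac:(lra)) as [u [[Hu HGu] Hun]].
    destruct (Hyu u Hu) as [y [Hy Huy']].
    exists y. split.
    + split; [exact Hy|]. destruct (Htr y ltac:(lra)) as [H _]. rewrite H, Huy'. exact HGu.
    + intros y' [Hy' Hg']. apply Hinj; try lra. rewrite Huy'. apply Hun. split.
      * apply Huy. exact Hy'.
      * destruct (Htr y' ltac:(lra)) as [H _]. rewrite <- H. exact Hg'.
  - destruct Core2 as [ab [[Hab [P1 P2]] Hun]].
    exists ab. split.
    + split; [exact Hab|]. split.
      * intros a y Ha Hy HGy. destruct (Htr y ltac:(lra)) as [H1 H2].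
        rewrite Htr0, H2. apply Rmult_gt_compat_l; [exact HYb|].
        apply (P1 a (uof y) Ha (Huy y Hy)). rewrite <- H1. exact HGy.
      * intros a y Ha Hy HGy. destruct (Htr y ltac:(lra)) as [H1 H2].
        rewrite Htr0, H2. apply Rmult_gt_compat_l; [exact HYb|].
        apply (P2 a (uof y) Ha (Huy y Hy)). rewrite <- H1. exact HGy.
    + intros ab' [Hab' [Q1 Q2]]. apply Hun. split; [exact Hab'|]. split.
      * intros a u Ha Hu HGu. destruct (Hyu u Hu) as [y [Hy Huy']].
        destruct (Htr y ltac:(lra)) as [H1 H2].
        specialize (Q1 a y Ha Hy). rewrite H1, Huy' in Q1. specialize (Q1 HGu).
        rewrite Htr0, H2, Huy' in Q1. apply Rmult_gt_reg_l in Q1; [exact Q1|exact HYb].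
      * intros a u Ha Hu HGu. destruct (Hyu u Hu) as [y [Hy Huy']].
        destruct (Htr y ltac:(lra)) as [H1 H2].
        specialize (Q2 a y Ha Hy). rewrite H1, Huy' in Q2. specialize (Q2 HGu).
        rewrite Htr0, H2, Huy' in Q2. apply Rmult_gt_reg_l in Q2; [exact Q2|exact HYb].
Qed.
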